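(* Let $n$ be odd and let $A$ be an $n\times n$ semi-ASM. Then $A$ has a semi-ASM extension $B$ all of whose entries are nonzero.
   Context: A semi-ASM of order $n$ is an $n\times n$ matrix with entries in $\{0,1,-1\}$ all of whose row sums and column sums equal $1$. If $A$ and $B$ are semi-ASMs of order $n$ and $B$ agrees with $A$ in every position where $A$ is nonzero, then $B$ is a semi-ASM extension of $A$. *)

(* Defs.v *)
From mathcomp Require Import all_boot all_order all_algebra.
Set Implicit Arguments. Unset Strict Implicit. Unset Printing Implicit Defensive.
Import Order.TTheory GRing.Theory Num.Theory.
Local Open Scope ring_scope.

Definition semiASM (n : nat) (A : 'M[int]_n) : Prop :=
  (forall i j, A i j = 0 \/ A i j = 1 \/ A i j = -1) /\
  (forall i, \sum_(j < n) A i j = 1) /\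
  (forall j, \sum_(i < n) A i j = 1).

Definition semiASM_ext (n : nat) (A B : 'M[int]_n) : Prop :=
  semiASM A /\ semiASM B /\ (forall i j, A i j != 0 -> B i j = A i j).

(* Main.v *)
Require Import Defs.
From mathcomp Require Import all_boot all_order all_algebra.
From mathcomp Require Import zify.
Set Implicit Arguments. Unset Strict Implicit. Unset Printing Implicit Defensive.
Import Order.TTheory GRing.Theory Num.Theory.

Lemma sum_even (I : finType) (P : pred I) (F : I -> nat) :
  (forall j, P j -> ~~ odd (F j)) -> ~~ odd (\sum_(j | P j) F j).
Proof.
move=> H; apply: (big_ind (fun x => ~~ odd x)) => //.
  by move=> x y hx hy; rewrite oddD (negbTE hx) (negbTE hy).
Qed.

Lemma sum_ind1 (I : finType) (a : I) : \sum_(i : I) ((i == a) : nat) = 1.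
Proof.
by rewrite (bigD1 a) //= eqxx big1 // => i /negbTE ->.
Qed.

Lemma sum_indr (I J : finType) (i a : I) (b : J) :
  \sum_(j : J) (((i == a) && (j == b)) : nat) = (i == a).
Proof.
rewrite (bigD1 b) //= eqxx andbT big1 ?addn0 // => j /negbTE ->.
by rewrite andbF.
Qed.

Lemma sum_indc (I J : finType) (j : J) (a : I) (b : J) :
  \sum_(i : I) (((i == a) && (j == b)) : nat) = (j == b).
Proof.
rewrite (bigD1 a) //= eqxx big1 ?addn0 // => i /negbTE ->.
by [].
Qed.

Lemma sum_indrZ (I J : finType) (i a : I) (b : J) :
  (\sum_(j : J) ((((i == a) && (j == b)) : nat) : int) = ((i == a) : nat))%R.
Proof.
by rewrite -(big_morph Posz PoszD (erefl (Posz 0))) sum_indr.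
Qed.

Lemma sum_indcZ (I J : finType) (j : J) (a : I) (b : J) :
  (\sum_(i : I) ((((i == a) && (j == b)) : nat) : int) = ((j == b) : nat))%R.
Proof.
by rewrite -(big_morph Posz PoszD (erefl (Posz 0))) sum_indc.
Qed.

Lemma core m n k : forall Z : 'I_m -> 'I_n -> nat,
  \sum_i \sum_j Z i j < k ->
  (forall i, ~~ odd (\sum_j Z i j)) -> (forall j, ~~ odd (\sum_i Z i j)) ->
  exists S : 'I_m -> 'I_n -> int,
   (forall i j, (absz (S i j) <= Z i j)%N /\ odd (absz (S i j)) = odd (Z i j)) /\
   (forall i, \sum_j S i j = 0)%R /\ (forall j, \sum_i S i j = 0)%R.
Proof.
elim: k => [|k IH] Z Hk Hr Hc; first by [].
case: (pickP (fun p : 'I_m * 'I_n => odd (Z p.1 p.2))) => [[r c1] /= o1|none];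
  last first.
  exists (fun _ _ => 0%R); split; last by split=> ?; rewrite big1.
  by move=> i j; have := none (i, j); rewrite /= => ->.
case: (pickP (fun c => (c != c1) && odd (Z r c))) => [c2 /andP[nc o2]|none];
  last first.
  exfalso; move: (Hr r); rewrite (bigD1 c1) //= oddD o1 /= negbK.
  apply/negP; apply: sum_even => j hj; move: (none j); rewrite /= hj /=.
  by move=> ->.
case: (pickP (fun i => (i != r) && odd (Z i c2))) => [r2 /andP[nr o3]|none];
  last first.
  exfalso; move: (Hc c2); rewrite (bigD1 r) //= oddD o2 /= negbK.
  apply/negP; apply: sum_even => i hi; move: (none i); rewrite /= hi /=.
  by move=> ->.
have nr' : r != r2 by rewrite eq_sym.
have nc' : c1 != c2 by rewrite eq_sym.
pose e1 := fun i j => (((i == r) && (j == c1)) : nat).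
pose e2 := fun i j => (((i == r) && (j == c2)) : nat).
pose e3 := fun i j => (((i == r2) && (j == c2)) : nat).
pose e4 := fun i j => (((i == r2) && (j == c1)) : nat).
have cases : forall i j, (i = r /\ j = c1) \/ (i = r /\ j = c2) \/
    (i = r2 /\ j = c2) \/ (i = r2 /\ j = c1) \/
    (e1 i j = 0 /\ e2 i j = 0 /\ e3 i j = 0 /\ e4 i j = 0).
  move=> i j; rewrite /e1 /e2 /e3 /e4 /=.
  case: (eqVneq i r) => [->|ir].
    case: (eqVneq j c1) => [->|jc1]; first by left.
    case: (eqVneq j c2) => [->|jc2]; first by right; left.
    by do 4 right; rewrite ?andbF.
  case: (eqVneq i r2) => [->|ir2].
    case: (eqVneq j c1) => [->|jc1]; first by do 3 right; left.
    case: (eqVneq j c2) => [->|jc2]; first by do 2 right; left.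
    by do 4 right; rewrite ?andbF.
  by do 4 right; rewrite ?andbF.
have ev := (eqxx r, eqxx r2, eqxx c1, eqxx c2, negbTE nr, negbTE nr', negbTE nc, negbTE nc').
have Hle : forall i j, (e1 i j + e2 i j + e3 i j <= Z i j)%N.
  move=> i j; case: (cases i j) => [[-> ->]|[[-> ->]|[[-> ->]|[[-> ->]|[E1 [E2 [E3 _]]]]]]];
    try (rewrite E1 E2 E3; lia); rewrite /e1 /e2 /e3 /e4 /= ?ev /=; lia.
have [Z' HZ'] : exists Z' : 'I_m -> 'I_n -> nat,
    forall i j, Z' i j = Z i j - (e1 i j + e2 i j + e3 i j) + e4 i j.
  by exists (fun i j => Z i j - (e1 i j + e2 i j + e3 i j) + e4 i j).
have HZ : forall i j, Z' i j + (e1 i j + e2 i j + e3 i j) = Z i j + e4 i j.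
  by move=> i j; have := Hle i j; rewrite HZ'; lia.
have rowq : forall i, \sum_j Z' i j + ((i == r) + (i == r) + (i == r2)) = \sum_j Z i j + (i == r2).
  move=> i.
  have H : \sum_j (Z' i j + (e1 i j + e2 i j + e3 i j)) = \sum_j (Z i j + e4 i j).
    by apply: eq_bigr => j _; exact: HZ.
  rewrite !big_split /= /e1 /e2 /e3 /e4 /= !sum_indr in H; exact: H.
have colq : forall j, \sum_i Z' i j + ((j == c1) + (j == c2) + (j == c2)) = \sum_i Z i j + (j == c1).
  move=> j.
  have H : \sum_i (Z' i j + (e1 i j + e2 i j + e3 i j)) = \sum_i (Z i j + e4 i j).
    by apply: eq_bigr => i _; exact: HZ.
  rewrite !big_split /= /e1 /e2 /e3 /e4 /= !sum_indc in H; exact: H.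
have Hr' : forall i, ~~ odd (\sum_j Z' i j).
  move=> i; have := rowq i; have := Hr i; case: (i == r); case: (i == r2); rewrite /=; lia.
have Hc' : forall j, ~~ odd (\sum_i Z' i j).
  move=> j; have := colq j; have := Hc j; case: (j == c1); case: (j == c2); rewrite /=; lia.
have Hk' : \sum_i \sum_j Z' i j < k.
  have H : \sum_i (\sum_j Z' i j + ((i == r) + (i == r) + (i == r2))) = \sum_i (\sum_j Z i j + (i == r2)).
    by apply: eq_bigr => i _; exact: rowq.
  rewrite !big_split /= !sum_ind1 in H. set a := \sum_i \sum_j Z' i j in H *. set b := \sum_i \sum_j Z i j in H Hk. lia.
have [S' [HS' [HSr HSc]]] := IH Z' Hk' Hr' Hc'.
pose sg : int := if (0 < S' r2 c1)%R then 1%R else (-1)%R.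
have Hsg : ((0 < S' r2 c1)%R /\ sg = 1%R) \/ ((S' r2 c1 <= 0)%R /\ sg = (-1)%R).
  rewrite /sg; case: ifP => h; [left | right]; split => //.
  by rewrite leNgt h.
exists (fun i j => S' i j + sg * ((e1 i j : int) - (e2 i j : int) + (e3 i j : int) - (e4 i j : int)))%R.
split; last split.
- move=> i j; have := HZ i j; have := HS' i j.
  case: (cases i j) => [[-> ->]|[[-> ->]|[[-> ->]|[[-> ->]|[E1 [E2 [E3 E4]]]]]]];
    try (rewrite E1 E2 E3 E4; lia);
    rewrite /e1 /e2 /e3 /e4 /= ?ev /=; lia.
- move=> i; rewrite big_split /= HSr -mulr_sumr !sumrB big_split /= !sumrB.
  rewrite /e1 /e2 /e3 /e4 /= !sum_indrZ; lia.
- move=> j; rewrite big_split /= HSc -mulr_sumr !sumrB big_split /= !sumrB.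
  rewrite /e1 /e2 /e3 /e4 /= !sum_indcZ; lia.
Qed.

Lemma even_zeros (n : nat) (f : 'I_n -> int) :
  odd n -> (forall j, f j = 0 \/ f j = 1 \/ f j = -1)%R -> (\sum_j f j = 1)%R ->
  ~~ odd (\sum_j ((f j == 0%R) : nat)).
Proof.
move=> on Hv Hs.
have E : (\sum_j ((Posz ((f j == 0%R) : nat) + 2%:Z * Posz ((f j == (-1)%R) : nat)) + f j)
          = \sum_(j < n) (1 : int))%R.
  apply: eq_bigr => j _; by case: (Hv j) => [->|[->|->]].
rewrite big_split /= Hs big_split /= -mulr_sumr sumr_const card_ord in E.
rewrite -!(big_morph Posz PoszD (erefl (Posz 0))) in E.
move: E; set a := \sum_j _; set b := \sum_j _. 
rewrite natz.
lia.
Qed.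

Unset Implicit Arguments.
Local Open Scope ring_scope.

Theorem mainTheorem15 (n : nat) (A : 'M[int]_n) :
  odd n -> semiASM A ->
  exists B : 'M[int]_n, semiASM_ext A B /\ (forall i j, B i j != 0).
Proof.
move=> on HA; have HA' := HA; case: HA' => [Hv [Hrow Hcol]].
pose Z := fun i j => ((A i j == 0) : nat).
have Hr : forall i, ~~ odd (\sum_j Z i j).
  by move=> i; exact: (even_zeros on (Hv i) (Hrow i)).
have Hc : forall j, ~~ odd (\sum_i Z i j).
  by move=> j; exact: (even_zeros (f := fun i => A i j) on (fun i => Hv i j) (Hcol j)).
have [S [HS [HSr HSc]]] := core (ltnSn _) Hr Hc.
have key : forall i j, (A i j = 0 /\ (S i j = 1 \/ S i j = -1)) \/ (A i j != 0 /\ S i j = 0).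
  move=> i j; have := HS i j; rewrite /Z.
  by case: (Hv i j) => [->|[->|->]] /=; lia.
exists (\matrix_(i, j) (A i j + S i j)); split; last first.
  by move=> i j; rewrite mxE; case: (key i j); lia.
split; first exact: HA.
split; last by move=> i j nz; rewrite mxE; case: (key i j); lia.
split; [|split].
- by move=> i j; rewrite mxE; case: (key i j); case: (Hv i j); lia.
- move=> i; under eq_bigr do rewrite mxE.
  by rewrite big_split /= Hrow HSr addr0.
- move=> j; under eq_bigr do rewrite mxE.
  by rewrite big_split /= Hcol HSc addr0.
Qed.
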